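(* Let $Y$ be a solid vector space and $(X,d)$ a cone metric space over $Y$. Suppose $(x_n)$ is a sequence in $X$ with $d(x_n,x)\preceq b_n+\alpha\, d(y_n,y)+\beta\, d(z_n,z)$ for all $n$, where $x\in X$, $(b_n)$ is a sequence in $Y$ with $b_n\to0$, $(y_n)$ and $(z_n)$ are sequences in $X$ converging to $y$ and $z$ respectively, and $\alpha,\beta\ge0$ are real numbers. Then $x_n\to x$ in $X$.
   Context: Vector space with convergence: a real vector space $Y$ with a relation $\to$ between sequences in $Y$ and points of $Y$ (uniqueness of limits not assumed) such that (C1) $x_n\to x$, $y_n\to y$ imply $x_n+y_n\to x+y$; (C2) $x_n\to x$, $\lambda\in\mathbb R$ imply $\lambda x_n\to\lambda x$; (C3) $\lambda_n\to\lambda$ in $\mathbb R$ imply $\lambda_n x\to\lambda x$. $A\subseteq Y$ is open if $x_n\to x\in A$ implies $x_n\in A$ for all but finitely many $n$; closed if $x_n\to x$, $x_n\in A$ $\forall n$ imply $x\in A$; $A^\circ$ is the union of all open subsets of $A$. A cone is a nonempty closed $K$ with $\lambda K\subseteq K$ ($\lambda\ge0$), $K+K\subseteq K$, $K\cap(-K)=\{0\}$; solid if $K\ne\{0\}$, $K^\circ\ne\emptyset$. A vector ordering is a partial order $\preceq$ with (V1) $x\preceq y\Rightarrow x+z\preceq y+z$; (V2) $\lambda\ge0$, $x\preceq y\Rightarrow\lambda x\preceq\lambda y$; (V3) $x_n\to x$, $y_n\to y$, $x_n\preceq y_n$ $\forall n\Rightarrow x\preceq y$. Solid vector space: positive cone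 $K=\{x:x\succeq0\}$ solid, with $x\prec y$ iff $y-x\in K^\circ$. Cone metric space over $Y$: nonempty $X$ with $d\colon X\times X\to Y$, $d(x,y)\succeq0$, $d(x,y)=0$ iff $x=y$, $d(x,y)=d(y,x)$, $d(x,y)\preceq d(x,z)+d(z,y)$. Convergence in $X$: $x_n\to x$ iff for every $c\succ0$, $d(x_n,x)\prec c$ for all but finitely many $n$ (the topology with basis $U(x,r)=\{y:d(y,x)\prec r\}$, $r\succ 0$). *)

(* Defs.v *)
From Stdlib Require Import Reals.
From HB Require Import structures.
From mathcomp Require Import all_boot all_order all_algebra.
From mathcomp Require Import Rstruct.
Set Implicit Arguments. Unset Strict Implicit. Unset Printing Implicit Defensive.
Import GRing.Theory.
Local Open Scope ring_scope.

Section VSC.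
Variable Y : lmodType R.
Variable conv : (nat -> Y) -> Y -> Prop.

Definition vsc_axioms : Prop :=
  (forall (xs ys : nat -> Y) (x y : Y),
      conv xs x -> conv ys y -> conv (fun n => xs n + ys n) (x + y)) /\
  (forall (xs : nat -> Y) (x : Y) (l : R),
      conv xs x -> conv (fun n => l *: xs n) (l *: x)) /\
  (forall (ls : nat -> R) (l : R) (x : Y),
      Un_cv ls l -> conv (fun n => ls n *: x) (l *: x)).

Definition vsc_open (A : Y -> Prop) : Prop :=
  forall (xs : nat -> Y) (x : Y), conv xs x -> A x ->
    exists N : nat, forall n : nat, (N <= n)%N -> A (xs n).

Definition vsc_closed (A : Y -> Prop) : Prop :=
  forall (xs : nat -> Y) (x : Y), conv xs x -> (forall n, A (xs n)) -> A x.

Definition vsc_interior (A : Y -> Prop) : Y -> Prop :=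
  fun x => exists U : Y -> Prop, vsc_open U /\ (forall y, U y -> A y) /\ U x.

Definition is_cone (K : Y -> Prop) : Prop :=
  (exists x, K x) /\ vsc_closed K /\
  (forall (l : R) x, (0 <= l)%R -> K x -> K (l *: x)) /\
  (forall x y, K x -> K y -> K (x + y)) /\
  (forall x, K x -> K (- x) -> x = 0).

Definition is_solid_cone (K : Y -> Prop) : Prop :=
  is_cone K /\ (exists x, K x /\ x <> 0) /\ (exists x, vsc_interior K x).

Variable le : Y -> Y -> Prop.

Definition is_vector_ordering : Prop :=
  (forall x, le x x) /\ (forall x y, le x y -> le y x -> x = y) /\
  (forall x y z, le x y -> le y z -> le x z) /\
  (forall x y z, le x y -> le (x + z) (y + z)) /\
  (forall (l : R) x y, (0 <= l)%R -> le x y -> le (l *: x) (l *: y)) /\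
  (forall (xs ys : nat -> Y) x y, conv xs x -> conv ys y ->
     (forall n, le (xs n) (ys n)) -> le x y).

Definition pos_cone : Y -> Prop := fun x => le 0 x.

Definition is_solid_vector_space : Prop :=
  vsc_axioms /\ is_vector_ordering /\ is_solid_cone pos_cone.

Definition slt (x y : Y) : Prop := vsc_interior pos_cone (y - x).

Section ConeMetric.
Variable X : Type.
Variable d : X -> X -> Y.

Definition is_cone_metric : Prop :=
  (exists x : X, True) /\
  (forall x y, le 0 (d x y)) /\
  (forall x y, d x y = 0 <-> x = y) /\
  (forall x y, d x y = d y x) /\
  (forall x y z, le (d x y) (d x z + d z y)).

Definition cm_conv (xs : nat -> X) (x : X) : Prop :=
  forall c : Y, slt 0 c ->
    exists N : nat, forall n : nat, (N <= n)%N -> slt (d (xs n) x) c.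
End ConeMetric.
End VSC.

(* Main.v *)
Require Import Defs.
From Stdlib Require Import Reals.
From HB Require Import structures.
From mathcomp Require Import all_boot all_order all_algebra.
From mathcomp Require Import Rstruct.
From mathcomp Require Import ring lra.
Import Order.TTheory GRing.Theory Num.Theory.
Local Open Scope ring_scope.

Lemma conv_const {Y : lmodType R} {conv : (nat -> Y) -> Y -> Prop} :
  vsc_axioms conv -> forall c : Y, conv (fun _ => c) c.
Proof.
move=> [_ [_ H3]] c.
have := H3 (fun _ => 1%R) 1%R c.
rewrite scale1r; apply.
intros eps Heps; exists 0%nat; intros n _.
unfold R_dist; rewrite Rminus_diag Rabs_R0; exact Heps.
Qed.

Lemma le_subP {Y : lmodType R} {conv : (nat -> Y) -> Y -> Prop} {le : Y -> Y -> Prop} :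
  is_vector_ordering conv le -> forall a b : Y, le a b <-> le 0 (b - a).
Proof.
move=> [_ [_ [_ [V1 _]]]] a b; split => H.
  by have := V1 _ _ (- a) H; rewrite subrr.
by have := V1 _ _ a H; rewrite add0r subrK.
Qed.

Lemma K_add {Y : lmodType R} {conv : (nat -> Y) -> Y -> Prop} {le : Y -> Y -> Prop} :
  is_vector_ordering conv le -> forall a b : Y, le 0 a -> le 0 b -> le 0 (a + b).
Proof.
move=> [R1 [_ [T [V1 _]]]] a b Ha Hb.
apply: T Hb _. by have := V1 _ _ b Ha; rewrite add0r.
Qed.

Lemma int_add {Y : lmodType R} {conv : (nat -> Y) -> Y -> Prop} {le : Y -> Y -> Prop} :
  vsc_axioms conv -> is_vector_ordering conv le ->
  forall u w : Y, vsc_interior conv (pos_cone le) u -> le 0 w ->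
  vsc_interior conv (pos_cone le) (u + w).
Proof.
move=> HA HO u w [U [HU [HUK Hu]]] Hw.
exists (fun v => U (v - w)); split; [|split].
- move=> xs v Hx Hv.
  have Hc := conv_const HA (- w).
  have := (proj1 HA) _ _ _ _ Hx Hc.
  move=> H; exact: (HU _ _ H Hv).
- move=> v Hv; have := K_add HO _ _ (HUK _ Hv) Hw; by rewrite subrK.
- by rewrite addrK.
Qed.

Lemma int_K {Y : lmodType R} {conv : (nat -> Y) -> Y -> Prop} {le : Y -> Y -> Prop} (u : Y) :
  vsc_interior conv (pos_cone le) u -> le 0 u.
Proof. by move=> [U [_ [HUK Hu]]]; exact: HUK. Qed.

Lemma int_scale {Y : lmodType R} {conv : (nat -> Y) -> Y -> Prop} {le : Y -> Y -> Prop} :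
  vsc_axioms conv -> is_vector_ordering conv le ->
  forall (l : R) (u : Y), 0 < l -> vsc_interior conv (pos_cone le) u ->
  vsc_interior conv (pos_cone le) (l *: u).
Proof.
move=> HA HO l u Hl [U [HU [HUK Hu]]].
have l0 : l != 0 by exact: lt0r_neq0.
exists (fun v => U (l^-1 *: v)); split; [|split].
- move=> xs v Hx Hv.
  have := (proj1 (proj2 HA)) _ _ l^-1 Hx.
  move=> H; exact: (HU _ _ H Hv).
- move=> v Hv; have := HUK _ Hv.
  move: HO => [_ [_ [_ [_ [V2 _]]]]] H.
  have := V2 l _ _ (ltW Hl) H.
  by rewrite scaler0 scalerA mulfV // scale1r.
- by rewrite scalerA mulVf // scale1r.
Qed.

Lemma int_le {Y : lmodType R} {conv : (nat -> Y) -> Y -> Prop} {le : Y -> Y -> Prop} :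
  vsc_axioms conv -> is_vector_ordering conv le ->
  forall x y z : Y, le x y -> vsc_interior conv (pos_cone le) (z - y) ->
  vsc_interior conv (pos_cone le) (z - x).
Proof.
move=> HA HO x y z Hxy Hz.
have := int_add HA HO _ _ Hz (proj1 (le_subP HO x y) Hxy).
by rewrite addrA subrK.
Qed.

Lemma diff_split (Y : lmodType R) (u1 u2 v1 v2 : Y) :
  (u1 - v1) + (u2 - v2) = (u1 + u2) - (v1 + v2).
Proof. by rewrite addrACA opprD. Qed.

Lemma conv_eventually {Y : lmodType R} {conv : (nat -> Y) -> Y -> Prop} {le : Y -> Y -> Prop} :
  vsc_axioms conv -> forall (c : Y) (bs : nat -> Y),
  vsc_interior conv (pos_cone le) c -> conv bs 0 ->
  exists N, forall n, (N <= n)%N -> vsc_interior conv (pos_cone le) (c - bs n).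
Proof.
move=> HA c bs [U [HU [HUK Hu]]] Hb.
have Hc := conv_const HA c.
have Hb' := (proj1 (proj2 HA)) _ _ (-1) Hb.
have := (proj1 HA) _ _ _ _ Hc Hb'.
rewrite scaler0 addr0 => H.
have [N HN] := HU _ _ H Hu.
exists N => n Hn; exists U; split; [done|split; [done|]].
by have := HN n Hn; rewrite scaleN1r.
Qed.

Theorem theorem9p16 (Y : lmodType R) (conv : (nat -> Y) -> Y -> Prop)
    (le : Y -> Y -> Prop) (X : Type) (d : X -> X -> Y)
    (xs ys zs : nat -> X) (x y z : X) (bs : nat -> Y) (alpha beta : R) :
  is_solid_vector_space conv le ->
  is_cone_metric le d ->
  conv bs 0 ->
  cm_conv conv le d ys y ->
  cm_conv conv le d zs z ->
  (0 <= alpha)%R -> (0 <= beta)%R ->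
  (forall n, le (d (xs n) x) (bs n + alpha *: d (ys n) y + beta *: d (zs n) z)) ->
  cm_conv conv le d xs x.
Proof.
move=> [HA [HO _]] [_ [Hd0 _]] Hb Hy Hz Ha Hbe Hle c.
rewrite /slt subr0 => Hc.
set c3 := (3%:R)^-1 *: c.
have Hc3 : vsc_interior conv (pos_cone le) c3.
  by apply: int_scale => //; rewrite invr_gt0 ltr0n.
have Hcc : c = (c3 + c3) + c3.
  by rewrite /c3 -!scalerDl -[LHS]scale1r; congr (_ *: _); field.
have bound : forall (g : R) (ws : nat -> X) (w : X), 0 <= g -> cm_conv conv le d ws w ->
    exists N, forall n, (N <= n)%N -> le 0 (c3 - g *: d (ws n) w).
  move=> g ws w Hg Hw.
  have ga : 0 < g + 1 by lra.
  have ga0 : g + 1 != 0 by exact: lt0r_neq0.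
  have Hey : vsc_interior conv (pos_cone le) ((g + 1)^-1 *: c3).
    by apply: int_scale => //; rewrite invr_gt0.
  have Hs : slt conv le 0 ((g + 1)^-1 *: c3) by rewrite /slt subr0.
  have [N HN] := Hw _ Hs.
  exists N => n Hn.
  have H1 := int_K _ (HN n Hn).
  move: (HO) => [_ [_ [_ [_ [V2 _]]]]].
  have := V2 (g + 1) _ _ (ltW ga) H1.
  rewrite scaler0 => H2.
  have := K_add HO _ _ H2 (Hd0 (ws n) w).
  rewrite scalerBr scalerA mulfV // scale1r scalerDl scale1r opprD addrA subrK.
  done.
have [N1 HN1] := bound alpha ys y Ha Hy.
have [N2 HN2] := bound beta zs z Hbe Hz.
have [N3 HN3] := conv_eventually HA _ _ Hc3 Hb.
exists (maxn N1 (maxn N2 N3)) => n Hn.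
rewrite /slt.
apply: (int_le HA HO _ _ _ (Hle n)).
rewrite Hcc -diff_split -diff_split.
move: Hn; rewrite !geq_max => /andP[Hn1 /andP[Hn2 Hn3]].
exact: (int_add HA HO _ _ (int_add HA HO _ _ (HN3 n Hn3) (HN1 n Hn1)) (HN2 n Hn2)).
Qed.
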